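(* Let $k,l$ be positive integers and put $a=3k-2$, $b=3l-2$. For every cell $c$ of the Aztec rectangle $\mathcal{AR}_{a,b}$, the region $\mathcal{AR}_{a,b}$ with the single defect $c$ has a cover by L-trominoes, i.e. $\mathcal{AR}_{a,b}\setminus\{c\}$ can be partitioned into L-trominoes.
   Context: A cell is a unit square $[i,i+1]\times[j,j+1]$ with $i,j\in\mathbb{Z}$, labelled $(i,j)$. An L-tromino is a set of three cells equal to a $2\times 2$ block of cells with one cell removed. A defect is a cell of a region that must not be covered. A cover of a region $R$ with defect set $D$ is a set of pairwise disjoint L-trominoes, each contained in $R\setminus D$, whose union is $R\setminus D$. For positive integers $a,b$, the Aztec rectangle $\mathcal{AR}_{a,b}$ is (up to translation) the region consisting of the cells $(i,j)\in\mathbb{Z}^2$ with $0\le i+j\le 2b$ and $1\le j-i\le 2a+1$; it has $a$ cells along its southwestern side and $b$ cells along its northwestern side. *)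

(* Defs.v *)
From Stdlib Require Import ZArith List.
Open Scope Z_scope.

(* A cell (i,j) is the unit square [i,i+1]x[j,j+1]. *)
Definition cell := (Z * Z)%type.

Definition region := cell -> Prop.

Definition in_block (x y : Z) (c : cell) : Prop :=
  x <= fst c <= x + 1 /\ y <= snd c <= y + 1.

(* An L-tromino: a 2x2 block of cells with one cell removed.
   [tro_x],[tro_y] is the lower-left cell of the block; the removed cell is
   (tro_x + tro_dx, tro_y + tro_dy) with tro_dx, tro_dy in {0,1}. *)
Record tromino := Tromino { tro_x : Z; tro_y : Z; tro_dx : bool; tro_dy : bool }.

Definition b2z (b : bool) : Z := if b then 1 else 0.

Definition tro_cells (t : tromino) : region := fun c =>
  in_block (tro_x t) (tro_y t) c /\
  c <> (tro_x t + b2z (tro_dx t), tro_y t + b2z (tro_dy t)).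

Definition is_cover (R D : region) (T : list tromino) : Prop :=
  (forall i j, (i < length T)%nat -> (j < length T)%nat -> i <> j ->
     forall c, tro_cells (nth i T (Tromino 0 0 false false)) c ->
               ~ tro_cells (nth j T (Tromino 0 0 false false)) c) /\
  (forall t, In t T -> forall c, tro_cells t c -> R c /\ ~ D c) /\
  (forall c, R c -> ~ D c -> exists t, In t T /\ tro_cells t c).

Definition has_cover (R D : region) : Prop := exists T, is_cover R D T.

Definition aztec_rect (a b : Z) : region := fun c =>
  0 <= fst c + snd c <= 2 * b /\ 1 <= snd c - fst c <= 2 * a + 1.

(* Main.v *)
Require Import Defs.
From Stdlib Require Import ZArith List Lia.
Open Scope Z_scope.

Definition dflt := Tromino 0 0 false false.

Definition tiles (S : region) (T : list tromino) : Prop :=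
  (forall i j, (i < length T)%nat -> (j < length T)%nat -> i <> j ->
     forall c, tro_cells (nth i T dflt) c -> ~ tro_cells (nth j T dflt) c) /\
  (forall t, In t T -> forall c, tro_cells t c -> S c) /\
  (forall c, S c -> exists t, In t T /\ tro_cells t c).

Definition tileable S := exists T, tiles S T.

Lemma tileable_ext (S S' : region) : (forall c, S c <-> S' c) -> tileable S -> tileable S'.
Proof. intros H [T [H1 [H2 H3]]]. exists T. split; [exact H1|split].
- intros t Ht c Hc. apply H. eapply H2; eauto.
- intros c Hc. apply H3. apply H. exact Hc. Qed.

Lemma tileable_empty (S : region) : (forall c, ~ S c) -> tileable S.
Proof. intros H. exists nil. split; [|split].
- intros i j Hi. simpl in Hi. lia.
- intros t [].
- intros c Hc. exfalso; eapply H; eauto. Qed.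

Lemma tileable_one (S : region) t : (forall c, S c <-> tro_cells t c) -> tileable S.
Proof. intros H. exists (t :: nil). split; [|split].
- intros i j Hi Hj Hij. simpl in Hi, Hj. lia.
- intros t' [<-|[]] c Hc. apply H; exact Hc.
- intros c Hc. exists t. split; [left; reflexivity | apply H; exact Hc]. Qed.

Lemma tileable_union (S1 S2 S : region) : (forall c, S c <-> S1 c \/ S2 c) ->
  (forall c, S1 c -> S2 c -> False) -> tileable S1 -> tileable S2 -> tileable S.
Proof.
intros HS Hd [T1 [A1 [B1 C1]]] [T2 [A2 [B2 C2]]].
exists (T1 ++ T2). split; [|split].
- intros i j Hi Hj Hij c Hci Hcj. rewrite length_app in Hi, Hj.
  destruct (Nat.lt_ge_cases i (length T1)) as [i1|i2];
  destruct (Nat.lt_ge_cases j (length T1)) as [j1|j2].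
  + rewrite app_nth1 in Hci by lia. rewrite app_nth1 in Hcj by lia. exact (A1 i j i1 j1 Hij c Hci Hcj).
  + rewrite app_nth1 in Hci by lia. rewrite app_nth2 in Hcj by lia.
    apply (Hd c). apply (B1 (nth i T1 dflt)); [apply nth_In; lia | exact Hci]. apply (B2 (nth (j - length T1) T2 dflt)); [apply nth_In; lia | exact Hcj].
  + rewrite app_nth2 in Hci by lia. rewrite app_nth1 in Hcj by lia.
    apply (Hd c). apply (B1 (nth j T1 dflt)); [apply nth_In; lia | exact Hcj]. apply (B2 (nth (i - length T1) T2 dflt)); [apply nth_In; lia | exact Hci].
  + rewrite app_nth2 in Hci by lia. rewrite app_nth2 in Hcj by lia.
    eapply (A2 (i - length T1)%nat (j - length T1)%nat); [lia|lia|lia|exact Hci|exact Hcj].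
- intros t Ht c Hc. apply HS. apply in_app_or in Ht as [Ht|Ht]; [left; eapply B1 | right; eapply B2]; eauto.
- intros c Hc. apply HS in Hc as [Hc|Hc];
    [destruct (C1 c Hc) as [t [? ?]] | destruct (C2 c Hc) as [t [? ?]]];
    exists t; split; auto; apply in_or_app; auto.
Qed.

Lemma tro_iff x y dx dy c : tro_cells (Tromino x y dx dy) c <->
  x <= fst c <= x+1 /\ y <= snd c <= y+1 /\ ~ (fst c = x + b2z dx /\ snd c = y + b2z dy).
Proof. destruct c as [i j]; unfold tro_cells, in_block; simpl; split.
- intros [[H1 H2] H3]; repeat split; try lia. intros [-> ->]. apply H3; reflexivity.
- intros [H1 [H2 H3]]. split; [split; lia|]. intros E; injection E as E1 E2; apply H3; split; assumption. Qed.

Definition Ruv u1 u2 v1 v2 : region := fun c =>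
  u1 <= fst c + snd c <= u2 /\ v1 <= snd c - fst c <= v2.

Lemma par z : exists m, z = 2*m \/ z = 2*m+1.
Proof. exists (z / 2). pose proof (Z.div_mod z 2). pose proof (Z.mod_pos_bound z 2). lia. Qed.

Lemma zig p v : tileable (Ruv p (p+1) v (v+2)).
Proof. destruct (par (p - v)) as [m [E|E]].
- apply (tileable_one _ (Tromino (m-1) (p-m) false false)). intros c.
  rewrite tro_iff; unfold Ruv, b2z; simpl. split; intros; lia.
- apply (tileable_one _ (Tromino m (p-m) true true)). intros c.
  rewrite tro_iff; unfold Ruv, b2z; simpl. split; intros; lia.
Qed.

Lemma vzig p q : tileable (Ruv p (p+2) q (q+1)).
Proof. destruct (par (p - q)) as [m [E|E]].
- apply (tileable_one _ (Tromino m (p-m) true false)). intros c.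
  rewrite tro_iff; unfold Ruv, b2z; simpl. split; intros; lia.
- apply (tileable_one _ (Tromino m (p-m) false true)). intros c.
  rewrite tro_iff; unfold Ruv, b2z; simpl. split; intros; lia.
Qed.

Lemma zig_n p : forall (n : nat) v, tileable (Ruv p (p+1) v (v + 3*Z.of_nat n - 1)).
Proof. induction n as [|n IH]; intros v.
- apply tileable_empty. intros c; unfold Ruv; lia.
- apply (tileable_union (Ruv p (p+1) v (v+2)) (Ruv p (p+1) (v+3) (v+3 + 3*Z.of_nat n - 1))).
  + intros c; unfold Ruv; lia.
  + intros c; unfold Ruv; lia.
  + apply zig.
  + apply IH.
Qed.

Lemma upairs v1 v2 : (forall p, tileable (Ruv p (p+1) v1 v2)) ->
  forall (m : nat) p, tileable (Ruv p (p + 2*Z.of_nat m - 1) v1 v2).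
Proof. intros H; induction m as [|m IH]; intros p.
- apply tileable_empty. intros c; unfold Ruv; lia.
- apply (tileable_union (Ruv p (p+1) v1 v2) (Ruv (p+2) (p+2 + 2*Z.of_nat m - 1) v1 v2)).
  + intros c; unfold Ruv; lia.
  + intros c; unfold Ruv; lia.
  + apply H.
  + apply IH.
Qed.

Lemma vpairs u1 u2 : (forall q, tileable (Ruv u1 u2 q (q+1))) ->
  forall (m : nat) q, tileable (Ruv u1 u2 q (q + 2*Z.of_nat m - 1)).
Proof. intros H; induction m as [|m IH]; intros q.
- apply tileable_empty. intros c; unfold Ruv; lia.
- apply (tileable_union (Ruv u1 u2 q (q+1)) (Ruv u1 u2 (q+2) (q+2 + 2*Z.of_nat m - 1))).
  + intros c; unfold Ruv; lia.
  + intros c; unfold Ruv; lia.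
  + apply H.
  + apply IH.
Qed.

Definition minus (R : region) (d : cell) : region := fun c =>
  R c /\ ~ (fst c = fst d /\ snd c = snd d).

Lemma block p q m d : p - q = 2*m+1 -> Ruv p (p+2) q (q+2) d ->
  tileable (minus (Ruv p (p+2) q (q+2)) d).
Proof. intros E Hd.
apply (tileable_one _ (Tromino m (p-m) (Z.eqb (fst d) (m+1)) (Z.eqb (snd d) (p-m+1)))).
intros c. rewrite tro_iff; unfold minus, Ruv, b2z in *; simpl.
destruct (Z.eqb_spec (fst d) (m+1)); destruct (Z.eqb_spec (snd d) (p-m+1));
  split; intros; lia.
Qed.

Lemma column a s d : 1 <= a -> Ruv (2*s) (2*s+2) 1 (2*a+1) d ->
  tileable (minus (Ruv (2*s) (2*s+2) 1 (2*a+1)) d).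
Proof. intros Ha Hd.
set (t := Z.min ((snd d - fst d - 1)/2) (a-1)).
assert (Ht : 0 <= t <= a-1 /\ 2*t+1 <= snd d - fst d <= 2*t+3).
{ unfold t, Ruv in *. pose proof (Z.div_mod (snd d - fst d - 1) 2).
  pose proof (Z.mod_pos_bound (snd d - fst d - 1) 2). lia. }
assert (V := vpairs (2*s) (2*s+2) (fun q => vzig (2*s) q)).
apply (tileable_union (Ruv (2*s) (2*s+2) 1 (1 + 2*Z.of_nat (Z.to_nat t) - 1))
   (fun c => minus (Ruv (2*s) (2*s+2) (2*t+1) (2*t+3)) d c \/
             Ruv (2*s) (2*s+2) (2*t+4) (2*t+4 + 2*Z.of_nat (Z.to_nat (a-1-t)) - 1) c)).
- intros c; unfold minus, Ruv in *; lia.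
- intros c; unfold minus, Ruv in *; lia.
- apply V.
- apply (tileable_union (minus (Ruv (2*s) (2*s+2) (2*t+1) (2*t+3)) d)
     (Ruv (2*s) (2*s+2) (2*t+4) (2*t+4 + 2*Z.of_nat (Z.to_nat (a-1-t)) - 1))).
  + intros c; tauto.
  + intros c; unfold minus, Ruv in *; lia.
  + assert (Hb := block (2*s) (2*t+1) (s-t-1) d ltac:(lia) ltac:(unfold Ruv in *; lia)).
    replace (2*t+3) with (2*t+1+2) by lia. exact Hb.
  + apply V.
Qed.

Lemma main a b d : 1 <= a -> 1 <= b -> (exists n, 2*a+1 = 3*n /\ 0 <= n) ->
  Ruv 0 (2*b) 1 (2*a+1) d -> tileable (minus (Ruv 0 (2*b) 1 (2*a+1)) d).
Proof. intros Ha Hb [n [En Hn]] Hd.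
set (s := Z.min ((fst d + snd d)/2) (b-1)).
assert (Hs : 0 <= s <= b-1 /\ 2*s <= fst d + snd d <= 2*s+2).
{ unfold s, Ruv in *. pose proof (Z.div_mod (fst d + snd d) 2).
  pose proof (Z.mod_pos_bound (fst d + snd d) 2). lia. }
assert (Z1 : forall p, tileable (Ruv p (p+1) 1 (2*a+1))).
{ intros p. eapply tileable_ext; [|apply (zig_n p (Z.to_nat n) 1)].
  intros c; unfold Ruv; lia. }
assert (U := upairs _ _ Z1).
apply (tileable_union (Ruv 0 (0 + 2*Z.of_nat (Z.to_nat s) - 1) 1 (2*a+1))
   (fun c => minus (Ruv (2*s) (2*s+2) 1 (2*a+1)) d c \/
             Ruv (2*s+3) (2*s+3 + 2*Z.of_nat (Z.to_nat (b-1-s)) - 1) 1 (2*a+1) c)).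
- intros c; unfold minus, Ruv in *; lia.
- intros c; unfold minus, Ruv in *; lia.
- apply U.
- apply (tileable_union (minus (Ruv (2*s) (2*s+2) 1 (2*a+1)) d)
     (Ruv (2*s+3) (2*s+3 + 2*Z.of_nat (Z.to_nat (b-1-s)) - 1) 1 (2*a+1))).
  + intros c; tauto.
  + intros c; unfold minus, Ruv in *; lia.
  + apply column; [lia|]. unfold Ruv in *; lia.
  + apply U.
Qed.

Theorem theorem2 (k l : Z) (hk : 1 <= k) (hl : 1 <= l) (c : cell) :
  aztec_rect (3 * k - 2) (3 * l - 2) c ->
  has_cover (aztec_rect (3 * k - 2) (3 * l - 2)) (fun d => d = c).
Proof.
intros Hc.
assert (Hn : exists n, 2*(3*k-2)+1 = 3*n /\ 0 <= n) by (exists (2*k-1); lia).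
assert (H := main (3*k-2) (3*l-2) c ltac:(lia) ltac:(lia) Hn Hc).
destruct H as [T [A [B C]]]. exists T. split; [exact A|split].
- intros t Ht d Hd. destruct (B t Ht d Hd) as [H1 H2]. split; [exact H1|].
  intros ->. apply H2; split; reflexivity.
- intros d Hd Hnd. apply C. split; [exact Hd|]. intros [E1 E2]. apply Hnd.
  destruct d, c; simpl in *; subst; reflexivity.
Qed.
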